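(* Let $\Pi$ be a finite set of propositional variables and let $M^1=\langle W^1,\mathcal{N}^1,V^1\rangle$, $M^2=\langle W^2,\mathcal{N}^2,V^2\rangle$ be nIML1-models for the language over $\Pi$. Let $n\geq 0$. For every $w_1\in W^1$ and $w_2\in W^2$ the following are equivalent: (1) $w_1$ and $w_2$ are $n$-bisimilar; (2) $w_1$ and $w_2$ agree on all formulas (over $\Pi$) of degree at most $n$, i.e. for each such formula $\varphi$, $w_1\Vdash_{M^1}\varphi$ iff $w_2\Vdash_{M^2}\varphi$.
   Context: Formulas over $\Pi$ are built from the variables in $\Pi$ and $\bot$ using binary $\land,\lor,\rightarrow,\rightsquigarrow$ and unary $\Delta$ ($\sim\varphi$ abbreviates $\varphi\rightsquigarrow\bot$). An nIML1-model for this language is a triple $\langle W,\mathcal{N},V\rangle$ with $W\neq\emptyset$, $\mathcal{N}:W\to P(P(W))$ satisfying for all $w$: (a) $w\in\bigcap\mathcal{N}_w$; (b) $\bigcap\mathcal{N}_w\in\mathcal{N}_w$; (c) $u\in\bigcap\mathcal{N}_w\Rightarrow\bigcap\mathcal{N}_u\subseteq\bigcap\mathcal{N}_w$; (d) $\bigcap\mathcal{N}_w\subseteq X\subseteq\bigcup\mathcal{N}_w\Rightarrow X\in\mathcal{N}_w$; (e) $u\in\bigcap\mathcal{N}_w\Rightarrow\bigcup\mathcal{N}_u\subseteq\bigcup\mathcal{N}_w$ ($\bigcap\mathcal{N}_w$, $\bigcup\mathcal{N}_w$ the intersection and union of the family $\mathcal{N}_w$), and $V:\Pi\to P(W)$ with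 $w\in V(q)\Rightarrow\bigcap\mathcal{N}_w\subseteq V(q)$. Forcing: atoms via $V$; $\bot$ never; $\land,\lor$ pointwise; $w\Vdash\varphi\rightarrow\psi$ iff every $v\in\bigcap\mathcal{N}_w$ has $v\nVdash\varphi$ or $v\Vdash\psi$; $w\Vdash\varphi\rightsquigarrow\psi$ iff every $v\in\bigcup\mathcal{N}_w$ has $v\nVdash\varphi$ or $v\Vdash\psi$; $w\Vdash\Delta\varphi$ iff every $v\in\bigcup\mathcal{N}_w$ has $v\Vdash\varphi$. Degree: $deg(q)=deg(\bot)=0$; $deg(\varphi\land\psi)=deg(\varphi\lor\psi)=\max(deg\varphi,deg\psi)$; $deg(\varphi\rightarrow\psi)=deg(\varphi\rightsquigarrow\psi)=1+\max(deg\varphi,deg\psi)$; $deg(\Delta\varphi)=1+deg\varphi$. Worlds $w_1\in W^1$, $w_2\in W^2$ are $n$-bisimilar if there are relations $R_n\subseteq R_{n-1}\subseteq\dots\subseteq R_0\subseteq W^1\times W^2$ such that: $w_1R_nw_2$; whenever $xR_0y$, $x$ and $y$ force the same propositional variables; and for each $i$ with $i+1\leq n$ and all $x_1,x_2$ with $x_1R_{i+1}x_2$: for every $y\in\bigcap\mathcal{N}^2_{x_2}$ there is $x\in\bigcap\mathcal{N}^1_{x_1}$ with $xR_iy$; for every $y\in\bigcup\mathcal{N}^2_{x_2}$ there is $x\in\bigcup\mathcal{N}^1_{x_1}$ with $xR_iy$; for every $x\in\bigcap\mathcal{N}^1_{x_1}$ there is $y\in\bigcap\mathcal{N}^2_{x_2}$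 with $xR_iy$; for every $x\in\bigcup\mathcal{N}^1_{x_1}$ there is $y\in\bigcup\mathcal{N}^2_{x_2}$ with $xR_iy$. *)

(* Defs.v *)
From Stdlib Require Import List Arith.

Set Implicit Arguments.

Inductive form (P : Type) : Type :=
| Var : P -> form P
| Bot : form P
| And : form P -> form P -> form P
| Or : form P -> form P -> form P
| Imp : form P -> form P -> form P
| SImp : form P -> form P -> form P
| Delta : form P -> form P.

Arguments Bot {P}.

Definition Neg (P : Type) (phi : form P) : form P := SImp phi Bot.

Fixpoint deg (P : Type) (phi : form P) : nat :=
  match phi with
  | Var _ => 0
  | Bot => 0
  | And a b => Nat.max (deg a) (deg b)
  | Or a b => Nat.max (deg a) (deg b)
  | Imp a b => S (Nat.max (deg a) (deg b))
  | SImp a b => S (Nat.max (deg a) (deg b))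
  | Delta a => S (deg a)
  end.

Definition bigcap (W : Type) (F : (W -> Prop) -> Prop) : W -> Prop :=
  fun x => forall X, F X -> X x.
Definition bigcup (W : Type) (F : (W -> Prop) -> Prop) : W -> Prop :=
  fun x => exists X, F X /\ X x.

Record model (P : Type) : Type := Model {
  world : Type;
  world_inhabited : inhabited world;
  nbh : world -> (world -> Prop) -> Prop;
  val : P -> world -> Prop;
  cond_a : forall w, bigcap (nbh w) w;
  cond_b : forall w, nbh w (bigcap (nbh w));
  cond_c : forall w u, bigcap (nbh w) u ->
             forall v, bigcap (nbh u) v -> bigcap (nbh w) v;
  cond_d : forall w (X : world -> Prop),
             (forall v, bigcap (nbh w) v -> X v) ->
             (forall v, X v -> bigcup (nbh w) v) -> nbh w X;
  cond_e : forall w u, bigcap (nbh w) u ->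
             forall v, bigcup (nbh u) v -> bigcup (nbh w) v;
  val_persist : forall q w, val q w -> forall v, bigcap (nbh w) v -> val q v
}.

Arguments world {P}.
Arguments nbh {P}.
Arguments val {P}.

Definition core (P : Type) (M : model P) (w : world M) := bigcap (nbh M w).
Definition region (P : Type) (M : model P) (w : world M) := bigcup (nbh M w).

Fixpoint forces (P : Type) (M : model P) (w : world M) (phi : form P) : Prop :=
  match phi with
  | Var q => val M q w
  | Bot => False
  | And a b => forces M w a /\ forces M w b
  | Or a b => forces M w a \/ forces M w b
  | Imp a b => forall v, core M w v -> ~ forces M v a \/ forces M v b
  | SImp a b => forall v, region M w v -> ~ forces M v a \/ forces M v b
  | Delta a => forall v, region M w v -> forces M v a
  end.

Definition n_bisimilar (P : Type) (M1 M2 : model P) (n : nat)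
    (w1 : world M1) (w2 : world M2) : Prop :=
  exists R : nat -> world M1 -> world M2 -> Prop,
    R n w1 w2 /\
    (forall i, i < n -> forall x y, R (S i) x y -> R i x y) /\
    (forall x y, R 0 x y -> forall q, val M1 q x <-> val M2 q y) /\
    (forall i, i + 1 <= n -> forall x1 x2, R (S i) x1 x2 ->
       (forall y, core M2 x2 y -> exists x, core M1 x1 x /\ R i x y) /\
       (forall y, region M2 x2 y -> exists x, region M1 x1 x /\ R i x y) /\
       (forall x, core M1 x1 x -> exists y, core M2 x2 y /\ R i x y) /\
       (forall x, region M1 x1 x -> exists y, region M2 x2 y /\ R i x y)).

Definition finite_type (T : Type) : Prop := exists l : list T, forall x, In x l.

(* Main.v *)
Require Import Defs.
From Stdlib Require Import List Arith Lia Classical.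
Import ListNotations.

Section Aux.
Variable P : Type.

Lemma persist (M : model P) (phi : form P) :
  forall w, forces M w phi -> forall v, core M w v -> forces M v phi.
Proof.
  induction phi; simpl; intros w H v Hv.
  - exact (val_persist M p w H Hv).
  - exact H.
  - destruct H; split; eauto.
  - destruct H; [left|right]; eauto.
  - intros u Hu. apply H. exact (cond_c M w Hv Hu).
  - intros u Hu. apply H. exact (cond_e M w Hv Hu).
  - intros u Hu. apply H. exact (cond_e M w Hv Hu).
Qed.

Fixpoint conjT (ps : list (form P * bool)) : option (form P) :=
  match ps with
  | [] => None
  | (p, true) :: r => match conjT r with None => Some p | Some c => Some (And p c) end
  | (p, false) :: r => conjT r
  end.

Fixpoint disjF (ps : list (form P * bool)) : form P :=
  match ps with
  | [] => Bot
  | (p, false) :: r => Or p (disjF r)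
  | (p, true) :: r => disjF r
  end.

Definition chiC ps := match conjT ps with Some c => Imp c (disjF ps) | None => disjF ps end.
Definition chiR ps := match conjT ps with Some c => SImp c (disjF ps) | None => Delta (disjF ps) end.

Fixpoint allT (L : list (form P)) : list (list (form P * bool)) :=
  match L with
  | [] => [[]]
  | p :: r => map (cons (p, true)) (allT r) ++ map (cons (p, false)) (allT r)
  end.

Definition matches (M : model P) (w : world M) ps :=
  forall p b, In (p, b) ps -> (forces M w p <-> b = true).

Lemma conjT_sem ps : forall c, conjT ps = Some c -> forall M w,
  forces M w c <-> (forall p, In (p, true) ps -> forces M w p).
Proof.
  induction ps as [|[p b] r IH]; simpl; intros c E M w; [discriminate|].
  destruct b.
  - destruct (conjT r) as [c'|] eqn:E'; inversion E; subst; clear E.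
    + simpl. rewrite (IH c' eq_refl M w). split.
      * intros [H1 H2] q [Hq|Hq]; [inversion Hq; subst; auto | auto].
      * intros H; split; auto.
    + split.
      * intros H q [Hq|Hq]; [inversion Hq; subst; auto|].
        exfalso. clear -E' Hq. induction r as [|[p' b'] r' IHr]; simpl in *; auto.
        destruct b'; [destruct (conjT r'); discriminate|].
        destruct Hq as [Hq|Hq]; [discriminate|auto].
      * intros H; auto.
  - rewrite (IH c E M w). split.
    + intros H q [Hq|Hq]; [discriminate|auto].
    + intros H q Hq; auto.
Qed.

Lemma conjT_none ps : conjT ps = None -> forall p, ~ In (p, true) ps.
Proof.
  induction ps as [|[p b] r IH]; simpl; auto.
  destruct b; [destruct (conjT r); discriminate|].
  intros E q [Hq|Hq]; [discriminate|]. eapply IH; eauto.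
Qed.

Lemma disjF_sem ps M w :
  forces M w (disjF ps) <-> exists p, In (p, false) ps /\ forces M w p.
Proof.
  induction ps as [|[p b] r IH]; simpl.
  - split; [tauto|]. intros [q [[] _]].
  - destruct b.
    + rewrite IH. split; intros [q [Hq Hf]]; exists q; split; auto.
      destruct Hq; [discriminate|auto].
    + simpl. rewrite IH. split.
      * intros [H|[q [Hq Hf]]]; [exists p; auto|exists q; auto].
      * intros [q [[Hq|Hq] Hf]]; [inversion Hq; subst; auto|right; exists q; auto].
Qed.

Lemma deg_conjT ps i : (forall p b, In (p, b) ps -> deg p <= i) ->
  forall c, conjT ps = Some c -> deg c <= i.
Proof.
  induction ps as [|[p b] r IH]; simpl; intros H c E; [discriminate|].
  destruct b.
  - destruct (conjT r) as [c'|] eqn:E'; inversion E; subst.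
    + simpl. assert (deg p <= i) by eauto. assert (deg c' <= i) by eauto. lia.
    + eauto.
  - eauto.
Qed.

Lemma deg_disjF ps i : (forall p b, In (p, b) ps -> deg p <= i) -> deg (disjF ps) <= i.
Proof.
  induction ps as [|[p b] r IH]; simpl; intros H; [lia|].
  destruct b; eauto. simpl. assert (deg p <= i) by eauto. assert (deg (disjF r) <= i) by eauto. lia.
Qed.

Lemma deg_chiC ps i : (forall p b, In (p, b) ps -> deg p <= i) -> deg (chiC ps) <= S i.
Proof.
  intros H. unfold chiC. destruct (conjT ps) eqn:E.
  - simpl. pose proof (deg_conjT ps i H f E). pose proof (deg_disjF ps i H). lia.
  - pose proof (deg_disjF ps i H). lia.
Qed.

Lemma deg_chiR ps i : (forall p b, In (p, b) ps -> deg p <= i) -> deg (chiR ps) <= S i.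
Proof.
  intros H. unfold chiR. destruct (conjT ps) eqn:E.
  - simpl. pose proof (deg_conjT ps i H f E). pose proof (deg_disjF ps i H). lia.
  - simpl. pose proof (deg_disjF ps i H). lia.
Qed.

Lemma allT_in L ps : In ps (allT L) -> forall p b, In (p, b) ps -> In p L.
Proof.
  revert ps; induction L as [|q L IH]; simpl; intros ps Hps p b Hp.
  - destruct Hps as [<-|[]]. destruct Hp.
  - apply in_app_or in Hps. destruct Hps as [H|H]; apply in_map_iff in H;
      destruct H as [ps' [<- H]]; destruct Hp as [Hp|Hp];
      [inversion Hp; auto| right; eauto | inversion Hp; auto | right; eauto].
Qed.

Lemma allT_exists L M w : exists ps, In ps (allT L) /\ matches M w ps /\
  (forall p, In p L -> exists b, In (p, b) ps).
Proof.
  induction L as [|q L IH]; simpl.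
  - exists []. split; [auto|]. split; [intros p b []|]. intros p [].
  - destruct IH as [ps [H1 [H2 H3]]].
    destruct (classic (forces M w q)) as [Hq|Hq].
    + exists ((q, true) :: ps). split.
      { apply in_or_app. left. apply in_map. auto. }
      split.
      * intros p b [Hp|Hp]; [inversion Hp; subst; tauto|auto].
      * intros p [<-|Hp]; [exists true; left; auto|].
        destruct (H3 p Hp) as [b Hb]; exists b; right; auto.
    + exists ((q, false) :: ps). split.
      { apply in_or_app. right. apply in_map. auto. }
      split.
      * intros p b [Hp|Hp]; [inversion Hp; subst; split; [tauto|discriminate]|auto].
      * intros p [<-|Hp]; [exists false; left; auto|].
        destruct (H3 p Hp) as [b Hb]; exists b; right; auto.
Qed.

Lemma matches_sat M w ps : matches M w ps ->
  (forall p, In (p, true) ps -> forces M w p) /\ ~ forces M w (disjF ps).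
Proof.
  intros H. split.
  - intros p Hp. apply (H p true Hp). auto.
  - rewrite disjF_sem. intros [p [Hp Hf]]. apply (H p false Hp) in Hf. discriminate.
Qed.

Lemma sat_matches M w ps :
  (forall p, In (p, true) ps -> forces M w p) -> ~ forces M w (disjF ps) -> matches M w ps.
Proof.
  intros H1 H2 p b Hp. destruct b.
  - split; auto.
  - split; [|discriminate]. intros Hf. exfalso. apply H2. apply disjF_sem. eauto.
Qed.

Lemma core_transfer (M M' : model P) (a : world M) (b : world M') ps :
  (forces M a (chiC ps) -> forces M' b (chiC ps)) ->
  forall v, core M' b v -> matches M' v ps -> exists u, core M a u /\ matches M u ps.
Proof.
  intros Htr v Hv Hm. destruct (matches_sat _ _ _ Hm) as [Mt Mf].
  unfold chiC in Htr. destruct (conjT ps) as [c|] eqn:E.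
  - assert (Hb : ~ forces M' b (Imp c (disjF ps))).
    { intros Hb. destruct (Hb v Hv) as [Hn|Hd]; [|auto].
      apply Hn. apply (conjT_sem ps c E). auto. }
    apply NNPP. intros Hn. apply Hb, Htr. simpl. intros u Hu.
    destruct (classic (forces M u c)) as [Hc|Hc]; [|left; auto].
    destruct (classic (forces M u (disjF ps))) as [Hd|Hd]; [right; auto|].
    exfalso. apply Hn. exists u. split; auto. apply sat_matches; auto.
    apply (conjT_sem ps c E). auto.
  - assert (Hb : ~ forces M' b (disjF ps)).
    { intros Hb. apply Mf. exact (persist M' _ b Hb v Hv). }
    exists a. split; [exact (cond_a M a)|]. apply sat_matches.
    + intros p Hp. exfalso. exact (conjT_none ps E p Hp).
    + intros Ha. auto.
Qed.

Lemma region_transfer (M M' : model P) (a : world M) (b : world M') ps :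
  (forces M a (chiR ps) -> forces M' b (chiR ps)) ->
  forall v, region M' b v -> matches M' v ps -> exists u, region M a u /\ matches M u ps.
Proof.
  intros Htr v Hv Hm. destruct (matches_sat _ _ _ Hm) as [Mt Mf].
  unfold chiR in Htr. destruct (conjT ps) as [c|] eqn:E.
  - assert (Hb : ~ forces M' b (SImp c (disjF ps))).
    { intros Hb. destruct (Hb v Hv) as [Hn|Hd]; [|auto].
      apply Hn. apply (conjT_sem ps c E). auto. }
    apply NNPP. intros Hn. apply Hb, Htr. simpl. intros u Hu.
    destruct (classic (forces M u c)) as [Hc|Hc]; [|left; auto].
    destruct (classic (forces M u (disjF ps))) as [Hd|Hd]; [right; auto|].
    exfalso. apply Hn. exists u. split; auto. apply sat_matches; auto.
    apply (conjT_sem ps c E). auto.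
  - assert (Hb : ~ forces M' b (Delta (disjF ps))).
    { intros Hb. apply Mf. exact (Hb v Hv). }
    apply NNPP. intros Hn. apply Hb, Htr. simpl. intros u Hu.
    apply NNPP. intros Hd. apply Hn. exists u. split; auto. apply sat_matches; auto.
    intros p Hp. exfalso. exact (conjT_none ps E p Hp).
Qed.

Lemma agree_of_match L ps (M M' : model P) (u : world M) (v : world M') :
  matches M u ps -> matches M' v ps -> (forall p, In p L -> exists b, In (p, b) ps) ->
  forall p, In p L -> (forces M u p <-> forces M' v p).
Proof.
  intros H1 H2 H3 p Hp. destruct (H3 p Hp) as [b Hb].
  rewrite (H1 p b Hb), (H2 p b Hb). tauto.
Qed.

End Aux.
Arguments persist {P}.
Arguments conjT {P}.
Arguments disjF {P}.
Arguments chiC {P}.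
Arguments chiR {P}.
Arguments allT {P}.
Arguments matches {P}.
Arguments conjT_sem {P}.
Arguments conjT_none {P}.
Arguments disjF_sem {P}.
Arguments deg_conjT {P}.
Arguments deg_disjF {P}.
Arguments deg_chiC {P}.
Arguments deg_chiR {P}.
Arguments allT_in {P}.
Arguments allT_exists {P}.
Arguments matches_sat {P}.
Arguments sat_matches {P}.
Arguments core_transfer {P}.
Arguments region_transfer {P}.
Arguments agree_of_match {P}.

Section Main.
Variable P : Type.

Definition agreeL (L : list (form P)) i := forall (M M' : model P) (a : world M) (b : world M'),
  (forall p, In p L -> (forces M a p <-> forces M' b p)) ->
  forall phi, deg phi <= i -> (forces M a phi <-> forces M' b phi).

Lemma imp_step L i (HL : agreeL L i) (M M' : model P) (a : world M) (b : world M')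
  (HC : forall ps, In ps (allT L) -> forces M' b (chiC ps) -> forces M a (chiC ps))
  f g (Hf : deg f <= i) (Hg : deg g <= i) :
  forces M' b (Imp f g) -> forces M a (Imp f g).
Proof.
  simpl. intros Hb v Hv. destruct (classic (forces M v g)) as [Hvg|Hvg]; [right; auto|left].
  intros Hvf. destruct (allT_exists L M v) as [ps [Hps [Hm Hcov]]].
  destruct (core_transfer M' M b a ps (HC ps Hps) v Hv Hm) as [u [Hu Hmu]].
  pose proof (HL M' M u v (agree_of_match L ps M' M u v Hmu Hm Hcov)) as Hag.
  destruct (Hb u Hu) as [Hn|Hy].
  - apply Hn. apply (Hag f Hf). auto.
  - apply Hvg. apply (Hag g Hg). auto.
Qed.

Lemma simp_step L i (HL : agreeL L i) (M M' : model P) (a : world M) (b : world M')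
  (HC : forall ps, In ps (allT L) -> forces M' b (chiR ps) -> forces M a (chiR ps))
  f g (Hf : deg f <= i) (Hg : deg g <= i) :
  forces M' b (SImp f g) -> forces M a (SImp f g).
Proof.
  simpl. intros Hb v Hv. destruct (classic (forces M v g)) as [Hvg|Hvg]; [right; auto|left].
  intros Hvf. destruct (allT_exists L M v) as [ps [Hps [Hm Hcov]]].
  destruct (region_transfer M' M b a ps (HC ps Hps) v Hv Hm) as [u [Hu Hmu]].
  pose proof (HL M' M u v (agree_of_match L ps M' M u v Hmu Hm Hcov)) as Hag.
  destruct (Hb u Hu) as [Hn|Hy].
  - apply Hn. apply (Hag f Hf). auto.
  - apply Hvg. apply (Hag g Hg). auto.
Qed.

Lemma delta_step L i (HL : agreeL L i) (M M' : model P) (a : world M) (b : world M')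
  (HC : forall ps, In ps (allT L) -> forces M' b (chiR ps) -> forces M a (chiR ps))
  f (Hf : deg f <= i) :
  forces M' b (Delta f) -> forces M a (Delta f).
Proof.
  simpl. intros Hb v Hv. apply NNPP. intros Hvf.
  destruct (allT_exists L M v) as [ps [Hps [Hm Hcov]]].
  destruct (region_transfer M' M b a ps (HC ps Hps) v Hv Hm) as [u [Hu Hmu]].
  pose proof (HL M' M u v (agree_of_match L ps M' M u v Hmu Hm Hcov)) as Hag.
  apply Hvf. apply (Hag f Hf). auto.
Qed.

Lemma fin (l : list P) (Hl : forall q, In q l) i :
  exists L : list (form P), (forall p, In p L -> deg p <= i) /\ agreeL L i.
Proof.
  induction i as [|i [L [HLd HL]]].
  - exists (map (@Var P) l). split.
    + intros p Hp. apply in_map_iff in Hp. destruct Hp as [q [<- _]]. simpl. lia.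
    + intros M M' a b H phi. induction phi; simpl; intros Hd.
      * apply (H (Var p)). apply in_map. apply Hl.
      * tauto.
      * rewrite IHphi1, IHphi2 by lia. tauto.
      * rewrite IHphi1, IHphi2 by lia. tauto.
      * lia.
      * lia.
      * lia.
  - exists (map (@Var P) l ++ flat_map (fun ps => [chiC ps; chiR ps]) (allT L)). split.
    + intros p Hp. apply in_app_or in Hp. destruct Hp as [Hp|Hp].
      * apply in_map_iff in Hp. destruct Hp as [q [<- _]]. simpl. lia.
      * apply in_flat_map in Hp. destruct Hp as [ps [Hps Hp]].
        assert (Hd : forall p b, In (p, b) ps -> deg p <= i)
          by (intros q b Hq; exact (HLd q (allT_in L ps Hps q b Hq))).
        destruct Hp as [<-|[<-|[]]]; [apply deg_chiC|apply deg_chiR]; auto.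
    + intros M M' a b H.
      assert (HC : forall ps, In ps (allT L) -> (forces M a (chiC ps) <-> forces M' b (chiC ps))).
      { intros ps Hps. apply H. apply in_or_app. right. apply in_flat_map.
        exists ps. split; [auto| left; auto]. }
      assert (HR : forall ps, In ps (allT L) -> (forces M a (chiR ps) <-> forces M' b (chiR ps))).
      { intros ps Hps. apply H. apply in_or_app. right. apply in_flat_map.
        exists ps. split; [auto| right; left; auto]. }
      intros phi. induction phi; intros Hd; simpl deg in Hd.
      * apply (H (Var p)). apply in_or_app. left. apply in_map. apply Hl.
      * simpl; tauto.
      * simpl. rewrite IHphi1, IHphi2 by lia. tauto.
      * simpl. rewrite IHphi1, IHphi2 by lia. tauto.
      * split.
        -- apply (imp_step L i HL M' M b a); try lia. intros ps Hps; apply HC; auto.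
        -- apply (imp_step L i HL M M' a b); try lia. intros ps Hps; apply HC; auto.
      * split.
        -- apply (simp_step L i HL M' M b a); try lia. intros ps Hps; apply HR; auto.
        -- apply (simp_step L i HL M M' a b); try lia. intros ps Hps; apply HR; auto.
      * split.
        -- apply (delta_step L i HL M' M b a); try lia. intros ps Hps; apply HR; auto.
        -- apply (delta_step L i HL M M' a b); try lia. intros ps Hps; apply HR; auto.
Qed.

Lemma sound (M1 M2 : model P) n (R : nat -> world M1 -> world M2 -> Prop)
  (Hmono : forall i, i < n -> forall x y, R (S i) x y -> R i x y)
  (Hat : forall x y, R 0 x y -> forall q, val M1 q x <-> val M2 q y)
  (Hbf : forall i, i + 1 <= n -> forall x1 x2, R (S i) x1 x2 ->
       (forall y, core M2 x2 y -> exists x, core M1 x1 x /\ R i x y) /\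
       (forall y, region M2 x2 y -> exists x, region M1 x1 x /\ R i x y) /\
       (forall x, core M1 x1 x -> exists y, core M2 x2 y /\ R i x y) /\
       (forall x, region M1 x1 x -> exists y, region M2 x2 y /\ R i x y)) :
  forall phi k x y, k <= n -> R k x y -> deg phi <= k ->
    (forces M1 x phi <-> forces M2 y phi).
Proof.
  assert (Hdown : forall k x y, k <= n -> R k x y -> R 0 x y).
  { induction k; intros x y Hk Hr; auto. apply IHk; [lia|]. apply Hmono; auto. }
  induction phi; intros k x y Hk Hr Hd; simpl in Hd |- *.
  - apply (Hat x y (Hdown k x y Hk Hr)).
  - tauto.
  - rewrite (IHphi1 k x y), (IHphi2 k x y) by (auto; lia). tauto.
  - rewrite (IHphi1 k x y), (IHphi2 k x y) by (auto; lia). tauto.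
  - destruct k as [|i]; [lia|].
    destruct (Hbf i ltac:(lia) x y Hr) as [B1 [B2 [F1 F2]]]. split.
    + intros H v Hv. destruct (B1 v Hv) as [u [Hu Ru]].
      rewrite <- (IHphi1 i u v), <- (IHphi2 i u v) by (auto; lia). auto.
    + intros H u Hu. destruct (F1 u Hu) as [v [Hv Ru]].
      rewrite (IHphi1 i u v), (IHphi2 i u v) by (auto; lia). auto.
  - destruct k as [|i]; [lia|].
    destruct (Hbf i ltac:(lia) x y Hr) as [B1 [B2 [F1 F2]]]. split.
    + intros H v Hv. destruct (B2 v Hv) as [u [Hu Ru]].
      rewrite <- (IHphi1 i u v), <- (IHphi2 i u v) by (auto; lia). auto.
    + intros H u Hu. destruct (F2 u Hu) as [v [Hv Ru]].
      rewrite (IHphi1 i u v), (IHphi2 i u v) by (auto; lia). auto.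
  - destruct k as [|i]; [lia|].
    destruct (Hbf i ltac:(lia) x y Hr) as [B1 [B2 [F1 F2]]]. split.
    + intros H v Hv. destruct (B2 v Hv) as [u [Hu Ru]].
      rewrite <- (IHphi i u v) by (auto; lia). auto.
    + intros H u Hu. destruct (F2 u Hu) as [v [Hv Ru]].
      rewrite (IHphi i u v) by (auto; lia). auto.
Qed.

End Main.
Arguments fin {P}.
Arguments sound {P}.

Theorem theorem7p4 (P : Type) (HP : finite_type P) (M1 M2 : model P) (n : nat)
  (w1 : world M1) (w2 : world M2) :
  n_bisimilar M1 M2 n w1 w2 <->
  (forall phi : form P, deg phi <= n -> (forces M1 w1 phi <-> forces M2 w2 phi)).
Proof.
  split.
  - intros [R [H0 [Hmono [Hat Hbf]]]] phi Hd.
    exact (sound M1 M2 n R Hmono Hat Hbf phi n w1 w2 (le_n n) H0 Hd).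
  - intros H. destruct HP as [l Hl].
    exists (fun i (x : world M1) (y : world M2) =>
      forall phi : form P, deg phi <= i -> (forces M1 x phi <-> forces M2 y phi)).
    split; [exact H|]. split.
    { intros i _ x y Hr phi Hd. apply Hr. lia. }
    split.
    { intros x y Hr q. apply (Hr (Var q)). simpl. lia. }
    intros i _ x1 x2 Hr.
    destruct (fin l Hl i) as [L [HLd HL]].
    assert (Hdps : forall ps, In ps (allT L) -> forall p b, In (p, b) ps -> deg p <= i)
      by (intros ps Hps q b Hq; exact (HLd q (allT_in L ps Hps q b Hq))).
    split; [|split; [|split]].
    + intros y Hy. destruct (allT_exists L M2 y) as [ps [Hps [Hm Hcov]]].
      destruct (core_transfer M1 M2 x1 x2 ps
        (proj1 (Hr _ (deg_chiC ps i (Hdps ps Hps)))) y Hy Hm) as [u [Hu Hmu]].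
      exists u. split; auto. apply HL. exact (agree_of_match L ps M1 M2 u y Hmu Hm Hcov).
    + intros y Hy. destruct (allT_exists L M2 y) as [ps [Hps [Hm Hcov]]].
      destruct (region_transfer M1 M2 x1 x2 ps
        (proj1 (Hr _ (deg_chiR ps i (Hdps ps Hps)))) y Hy Hm) as [u [Hu Hmu]].
      exists u. split; auto. apply HL. exact (agree_of_match L ps M1 M2 u y Hmu Hm Hcov).
    + intros x Hx. destruct (allT_exists L M1 x) as [ps [Hps [Hm Hcov]]].
      destruct (core_transfer M2 M1 x2 x1 ps
        (proj2 (Hr _ (deg_chiC ps i (Hdps ps Hps)))) x Hx Hm) as [u [Hu Hmu]].
      exists u. split; auto. apply HL. exact (agree_of_match L ps M1 M2 x u Hm Hmu Hcov).
    + intros x Hx. destruct (allT_exists L M1 x) as [ps [Hps [Hm Hcov]]].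
      destruct (region_transfer M2 M1 x2 x1 ps
        (proj2 (Hr _ (deg_chiR ps i (Hdps ps Hps)))) x Hx Hm) as [u [Hu Hmu]].
      exists u. split; auto. apply HL. exact (agree_of_match L ps M1 M2 x u Hm Hmu Hcov).
Qed.
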